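(* Every ado-semilattice $(S,\sqcup,\cap)$ is a $\curlyvee$-algebra when one defines $a\curlyvee b=(a\sqcup b)\cap(b\sqcup a)$. Consequently, every functional algebra of signature $(\curlyvee)$ is a $\curlyvee$-algebra.
   Context: An o-semilattice is an algebra $(L,\cap,\sqcup)$ such that $(L,\cap)$ is a semilattice and, with $x\leq y$ iff $x=x\cap y$, for all $x,y,z$: (i) $x\leq x\sqcup y$; (ii) $(x\cap y)\sqcup(y\cap z)\leq y$; (iii) $x\sqcup y\leq x\sqcup(y\cap(x\sqcup y))$; (iv) $x\cap z\leq(x\cap y)\sqcup z$. It is distributive if $(a\cap d)\sqcup((b\cap d)\cap(c\cap d))=((a\cap d)\sqcup(b\cap d))\cap((a\cap d)\sqcup(c\cap d))$ for all $a,b,c,d$. An ado-semilattice is a distributive o-semilattice in which $\sqcup$ is associative. A left regular band is a set with a binary operation $\sqcup$ satisfying $a\sqcup(b\sqcup c)=(a\sqcup b)\sqcup c$, $a\sqcup a=a$, $a\sqcup b=(a\sqcup b)\sqcup a$; write $a\lesssim b$ iff $b\sqcup a=b$. A $\curlyvee$-algebra is an algebra $(S,\curlyvee)$ such that, defining $a\sqcup b=a\curlyvee(a\curlyvee b)$: $(S,\sqcup)$ is a left regular band; $\curlyvee$ is commutative and idempotent; $(a\curlyvee b)\sqcup(a\sqcup b)=a\sqcup b$; $a\sqcup(b\curlyvee c)=(a\sqcup b)\curlyvee(a\sqcup c)$; and if $d\lesssim a,b,c,a\curlyvee b,b\curlyvee c$ then $d\lesssim a\curlyvee c$. For sets $X,Y$,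 $\mathrm{Par}(X,Y)$ is the set of partial functions $X\to Y$ as sets of pairs; for $f,g$, $g-f$ is the restriction of $g$ to $X\setminus\mathrm{dom}(f)$ and restricted union is $f\curlyvee g=(f-g)\cup(f\cap g)\cup(g-f)$. A functional algebra of signature $(\curlyvee)$ is one isomorphic to $(A,\curlyvee)$ with $A\subseteq\mathrm{Par}(X,Y)$ closed under restricted union. *)

(* Defs.v *)
Section Defs.
Variable S : Type.

Definition is_semilattice (meet : S -> S -> S) : Prop :=
  (forall x y z, meet x (meet y z) = meet (meet x y) z) /\
  (forall x y, meet x y = meet y x) /\
  (forall x, meet x x = x).

Definition sl_le (meet : S -> S -> S) (x y : S) : Prop := x = meet x y.

Definition is_o_semilattice (meet join : S -> S -> S) : Prop :=
  is_semilattice meet /\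
  (forall x y, sl_le meet x (join x y)) /\
  (forall x y z, sl_le meet (join (meet x y) (meet y z)) y) /\
  (forall x y, sl_le meet (join x y) (join x (meet y (join x y)))) /\
  (forall x y z, sl_le meet (meet x z) (join (meet x y) z)).

Definition is_distributive_o (meet join : S -> S -> S) : Prop :=
  is_o_semilattice meet join /\
  (forall a b c d,
     join (meet a d) (meet (meet b d) (meet c d)) =
     meet (join (meet a d) (meet b d)) (join (meet a d) (meet c d))).

Definition is_ado_semilattice (meet join : S -> S -> S) : Prop :=
  is_distributive_o meet join /\
  (forall a b c, join a (join b c) = join (join a b) c).

Definition is_left_regular_band (op : S -> S -> S) : Prop :=
  (forall a b c, op a (op b c) = op (op a b) c) /\
  (forall a, op a a = a) /\
  (forall a b, op a b = op (op a b) a).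

Definition vee_sq (vee : S -> S -> S) (a b : S) : S := vee a (vee a b).

Definition vee_lesssim (vee : S -> S -> S) (a b : S) : Prop :=
  vee_sq vee b a = b.

Definition is_vee_algebra (vee : S -> S -> S) : Prop :=
  is_left_regular_band (vee_sq vee) /\
  (forall a b, vee a b = vee b a) /\
  (forall a, vee a a = a) /\
  (forall a b, vee_sq vee (vee a b) (vee_sq vee a b) = vee_sq vee a b) /\
  (forall a b c, vee_sq vee a (vee b c) = vee (vee_sq vee a b) (vee_sq vee a c)) /\
  (forall a b c d,
     vee_lesssim vee d a -> vee_lesssim vee d b -> vee_lesssim vee d c ->
     vee_lesssim vee d (vee a b) -> vee_lesssim vee d (vee b c) ->
     vee_lesssim vee d (vee a c)).

End Defs.

(* Partial functions X -> Y, as sets of pairs (relations). *)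
Definition rel (X Y : Type) := X -> Y -> Prop.

Definition is_partial_function {X Y : Type} (f : rel X Y) : Prop :=
  forall x y1 y2, f x y1 -> f x y2 -> y1 = y2.

Definition in_dom {X Y : Type} (f : rel X Y) (x : X) : Prop := exists y, f x y.

Definition pf_minus {X Y : Type} (g f : rel X Y) : rel X Y :=
  fun x y => g x y /\ ~ in_dom f x.

Definition restricted_union {X Y : Type} (f g : rel X Y) : rel X Y :=
  fun x y => pf_minus f g x y \/ (f x y /\ g x y) \/ pf_minus g f x y.

Definition is_functional_vee_algebra (S : Type) (vee : S -> S -> S) : Prop :=
  exists (X Y : Type) (A : rel X Y -> Prop) (phi : S -> rel X Y),
    (forall f, A f -> is_partial_function f) /\
    (forall f g, A f -> A g -> A (restricted_union f g)) /\
    (forall a, A (phi a)) /\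
    (forall f, A f -> exists a, phi a = f) /\
    (forall a b, phi a = phi b -> a = b) /\
    (forall a b, phi (vee a b) = restricted_union (phi a) (phi b)).

(* Main.v *)
Require Import Defs.
From Stdlib Require Import Setoid.
Set Implicit Arguments.

Section Part1.
Variable S : Type.
Variables m j : S -> S -> S.
Hypothesis H : is_ado_semilattice S m j.

Definition le x y := x = m x y.

Lemma mA : forall x y z, m x (m y z) = m (m x y) z.
Proof. apply H. Qed.
Lemma mC : forall x y, m x y = m y x.
Proof. apply H. Qed.
Lemma mI : forall x, m x x = x.
Proof. apply H. Qed.
Lemma o1 : forall x y, le x (j x y).
Proof. apply H. Qed.
Lemma o2 : forall x y z, le (j (m x y) (m y z)) y.
Proof. apply H. Qed.
Lemma o3 : forall x y, le (j x y) (j x (m y (j x y))).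
Proof. apply H. Qed.
Lemma o4 : forall x y z, le (m x z) (j (m x y) z).
Proof. apply H. Qed.
Lemma dist0 : forall a b c d,
     j (m a d) (m (m b d) (m c d)) =
     m (j (m a d) (m b d)) (j (m a d) (m c d)).
Proof. apply H. Qed.
Lemma jA : forall a b c, j a (j b c) = j (j a b) c.
Proof. apply H. Qed.

Lemma le_refl x : le x x.
Proof. unfold le; now rewrite mI. Qed.
Lemma le_trans x y z : le x y -> le y z -> le x z.
Proof. unfold le; intros A B. assert (K : x = m x (m y z)) by (rewrite <- B; exact A). rewrite mA, <- A in K. exact K. Qed.
Lemma le_anti x y : le x y -> le y x -> x = y.
Proof. unfold le; intros A B. transitivity (m x y). exact A. rewrite mC. symmetry. exact B. Qed.
Lemma m_le_l x y : le (m x y) x.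
Proof. unfold le. rewrite <- mA, (mC y x), mA, mI. reflexivity. Qed.
Lemma m_le_r x y : le (m x y) y.
Proof. unfold le. rewrite <- mA, mI. reflexivity. Qed.
Lemma le_m z x y : le z x -> le z y -> le z (m x y).
Proof. unfold le; intros A B. rewrite mA, <- A. exact B. Qed.
Lemma le_eq x y : le x y -> m y x = x.
Proof. unfold le; intro A. rewrite mC. auto. Qed.
Lemma le_eq' x y : le x y -> m x y = x.
Proof. unfold le; intro A. auto. Qed.

Lemma jI x : j x x = x.
Proof. apply le_anti. pose proof (o2 x x x) as K. rewrite mI in K. exact K. apply o1. Qed.
Lemma lub x y z : le x z -> le y z -> le (j x y) z.
Proof. intros A B. pose proof (o2 x z y) as K. rewrite (le_eq' A), (le_eq B) in K. exact K. Qed.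
Lemma ub_r x y d : le x d -> le y d -> le y (j x y).
Proof. intros A B. pose proof (o4 d x y) as K. rewrite (le_eq A), (le_eq B) in K. exact K. Qed.
Lemma jC_c x y d : le x d -> le y d -> j x y = j y x.
Proof. intros A B. apply le_anti; apply lub.
  eapply ub_r; eauto. apply o1. eapply ub_r; eauto. apply o1. Qed.
Lemma jabs_r x y : le y x -> j x y = x.
Proof. intro A. apply le_anti. apply lub. apply le_refl. auto. apply o1. Qed.
Lemma jabs_l x y : le y x -> j y x = x.
Proof. intro A. apply le_anti. apply lub. auto. apply le_refl. eapply ub_r; eauto. apply le_refl. Qed.
Lemma lrb x y : j (j x y) x = j x y.
Proof. apply jabs_r, o1. Qed.
Lemma o3eq x y : j x y = j x (m y (j x y)).
Proof. apply le_anti. apply o3. apply lub. apply o1. apply m_le_r. Qed.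
Lemma mono_r x y y' : le y y' -> le (j x y) (j x y').
Proof. intro A. rewrite <- (jabs_l A), jA. apply o1. Qed.

Lemma dist a b c d : le a d -> le b d -> le c d -> j a (m b c) = m (j a b) (j a c).
Proof. intros A B C. pose proof (dist0 a b c d) as K.
  rewrite (le_eq' A), (le_eq' B), (le_eq' C) in K. exact K. Qed.

Lemma ddist a b c d : le a d -> le b d -> le c d -> m a (j b c) = j (m a b) (m a c).
Proof. intros A B C.
  assert (Ab : le (m a b) d) by (eapply le_trans; [apply m_le_l|exact A]).
  rewrite (dist Ab A C).
  rewrite (jabs_l (m_le_l a b)).
  rewrite (jC_c Ab C), (dist C A B), (jC_c C A), (jC_c C B).
  rewrite mA, (le_eq' (o1 a c)). reflexivity. Qed.

Lemma LD a x y : j a (m x y) = m (j a x) (j a y).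
Proof. apply le_anti.
  - apply le_m; apply mono_r; [apply m_le_l | apply m_le_r].
  - set (u := j a x). set (w := j a y). set (M := m u w).
    set (x' := m x u). set (y' := m y w).
    assert (Hu : u = j a x') by apply o3eq.
    assert (Hw : w = j a y') by apply o3eq.
    assert (Mu : le M u) by apply m_le_l.
    assert (Mw : le M w) by apply m_le_r.
    assert (au : le a u) by apply o1.
    assert (aw : le a w) by apply o1.
    assert (x'u : le x' u) by apply m_le_r.
    assert (y'w : le y' w) by apply m_le_r.
    set (p := m M a). set (q := m M x'). set (r := m M y').
    assert (E1 : M = j p q).
    { transitivity (m M (j a x')). rewrite <- Hu. symmetry; apply le_eq', Mu.
      apply (ddist (d:=u)); auto. }
    assert (E2 : M = j p r).
    { transitivity (m M (j a y')). rewrite <- Hw. symmetry; apply le_eq', Mw.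
      apply (ddist (d:=w)); auto. }
    assert (E3 : M = j p (m q r)).
    { rewrite (dist (d:=M)); try apply m_le_l. rewrite <- E1, <- E2. symmetry; apply mI. }
    assert (S1 : le M (j a M)) by (apply (ub_r au Mu)).
    eapply le_trans. exact S1.
    rewrite E3. rewrite jA. unfold p. rewrite (jabs_r (m_le_r M a)). fold p.
    apply mono_r. apply le_m.
    + eapply le_trans. apply m_le_l. eapply le_trans. apply m_le_r. apply m_le_l.
    + eapply le_trans. apply m_le_r. eapply le_trans. apply m_le_r. apply m_le_l.
Qed.

Definition v a b := m (j a b) (j b a).

Lemma sq a b : v a (v a b) = j a b.
Proof. unfold v at 1. set (V := v a b).
  assert (VL : le V (j a b)) by apply m_le_l.
  assert (E : j a V = j a b).
  { apply le_anti. apply lub. apply o1. exact VL.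
    rewrite o3eq. apply mono_r. apply le_m. apply m_le_r.
    eapply le_trans. apply m_le_l. apply o1. }
  rewrite <- (jC_c (o1 a b) VL), E. apply mI. Qed.

Lemma lsim_mono p q d : le p q -> j p d = p -> j q d = q.
Proof. intros A B. rewrite <- (jabs_r A) at 1. rewrite <- jA, B. apply jabs_r, A. Qed.

Lemma Q2 x y e d : le x e -> le y e -> j x d = x -> j y d = y -> j (m x y) d = m x y.
Proof. intros xe ye xd yd.
  assert (ed : j e d = e) by (apply (lsim_mono xe xd)).
  set (e0 := m e (j d e)).
  assert (K1 : forall z, le z e -> j z d = z -> j z e0 = e).
  { intros z ze zd. unfold e0. rewrite LD, (jabs_l ze), jA, zd, (jabs_l ze). apply mI. }
  assert (xye : le (m x y) e) by (eapply le_trans; [apply m_le_l| exact xe]).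
  assert (e0e : le e0 e) by apply m_le_l.
  assert (E : j (m x y) e0 = e).
  { rewrite (jC_c xye e0e), (dist e0e xe ye), <- (jC_c xe e0e), <- (jC_c ye e0e), K1, K1; auto. apply mI. }
  assert (de : le (m e d) (m x y)).
  { apply le_m.
    - pose proof (o4 e x d) as K. rewrite (le_eq xe), xd in K. exact K.
    - pose proof (o4 e y d) as K. rewrite (le_eq ye), yd in K. exact K. }
  set (u := m x y) in *. clearbody u.
  set (g := j u d).
  unfold e0 in E. rewrite LD, (jabs_l xye), jA in E. fold g in E.
  assert (ge1 : le e (j g e)) by (unfold le; symmetry; exact E).
  assert (Hc : j g e = j e g) by (apply (jC_c (d := j g e)); [apply o1 | exact ge1]).
  assert (Hge : j g e = e) by (rewrite Hc; unfold g; rewrite jA, (jabs_r xye); exact ed).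
  assert (gle : le g e) by (rewrite <- Hge; apply o1).
  apply le_anti.
  - unfold g. rewrite o3eq. fold g. apply lub. apply le_refl.
    eapply le_trans; [|exact de]. apply le_m.
    eapply le_trans. apply m_le_r. exact gle. apply m_le_l.
  - apply o1.
Qed.

Lemma Q1 x y d : j x d = x -> j y d = y -> j (v x y) d = v x y -> j (m x y) d = m x y.
Proof. intros xd yd vd.
  assert (A : j (m x (v x y)) d = m x (v x y)) by (apply (Q2 (e := j x y)); auto; [apply o1|apply m_le_l]).
  assert (B : j (m y (v x y)) d = m y (v x y)) by (apply (Q2 (e := j y x)); auto; [apply o1|apply m_le_r]).
  assert (C := Q2 (e := v x y) (m_le_r _ _) (m_le_r _ _) A B).
  eapply lsim_mono; [|exact C]. apply le_m.
  eapply le_trans. apply m_le_l. apply m_le_l.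
  eapply le_trans. apply m_le_r. apply m_le_l.
Qed.

Lemma part1 : is_vee_algebra S v.
Proof.
  assert (SQ : forall a b, vee_sq S v a b = j a b) by (intros; apply sq).
  unfold is_vee_algebra, is_left_regular_band, vee_lesssim. repeat split; intros; rewrite ?SQ.
  - apply jA.
  - apply jI.
  - symmetry; apply lrb.
  - unfold v; apply mC.
  - unfold v; rewrite jI; apply mI.
  - apply jabs_l, m_le_l.
  - unfold v. rewrite LD, !jA, !lrb. reflexivity.
  - rewrite ?SQ in *. idtac.
    assert (ab := Q1 H0 H1 H3). assert (bc := Q1 H1 H2 H4).
    assert (C := Q2 (e := b) (m_le_r _ _) (m_le_l _ _) ab bc).
    eapply lsim_mono; [|exact C]. apply le_m.
    eapply le_trans. apply m_le_l. eapply le_trans. apply m_le_l. apply o1.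
    eapply le_trans. apply m_le_r. eapply le_trans. apply m_le_r. apply o1.
Qed.
End Part1.
Unset Implicit Arguments.
From Stdlib Require Import ClassicalEpsilon FunctionalExtensionality PropExtensionality.

Section Transfer.
Variables (S T : Type) (vS : S -> S -> S) (vT : T -> T -> T) (psi : S -> T).
Hypothesis inj : forall a b, psi a = psi b -> a = b.
Hypothesis hom : forall a b, psi (vS a b) = vT (psi a) (psi b).

Lemma hom_sq a b : psi (vee_sq S vS a b) = vee_sq T vT (psi a) (psi b).
Proof. unfold vee_sq. rewrite !hom. reflexivity. Qed.

Lemma transfer : is_vee_algebra T vT -> is_vee_algebra S vS.
Proof.
  unfold is_vee_algebra, is_left_regular_band, vee_lesssim.
  intros [[A1 [A2 A3]] [B [C [D [E F]]]]].
  repeat split; intros; apply inj; rewrite ?hom_sq, ?hom, ?hom_sq, ?hom.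
  - apply A1.
  - apply A2.
  - apply A3.
  - apply B.
  - apply C.
  - apply D.
  - apply E.
  - apply (F (psi a) (psi b) (psi c) (psi d));
    [rewrite <- hom_sq; f_equal; assumption ..| |];
    rewrite <- hom, <- hom_sq; f_equal; assumption.
Qed.
End Transfer.

Section Opt.
Variable Y : Type.
Definition oru (o1 o2 : option Y) : option Y :=
  match o1, o2 with
  | Some a, Some b => if excluded_middle_informative (a = b) then Some a else None
  | Some a, None => Some a
  | None, o => o
  end.
End Opt.
Arguments oru {Y}.

Ltac kill :=
  repeat (simpl in *; subst; match goal with
  | |- context [excluded_middle_informative ?P] => destruct (excluded_middle_informative P)
  | H : context [excluded_middle_informative ?P] |- _ => destruct (excluded_middle_informative P)
  end); simpl in *; subst; try congruence.

Section Fun.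
Variables X Y : Type.
Definition ov (f g : X -> option Y) : X -> option Y := fun x => oru (f x) (g x).

Lemma fun_vee : is_vee_algebra (X -> option Y) ov.
Proof.
  unfold is_vee_algebra, is_left_regular_band, vee_lesssim, vee_sq, ov.
  repeat split; intros; try (apply functional_extensionality; intro x).
  all: try (destruct (a x); destruct (b x); try destruct (c x); simpl; kill; fail).
  all: try (destruct (a x); simpl; kill; fail).
  - apply (f_equal (fun f => f x)) in H, H0, H1, H2, H3. simpl in *.
    destruct (a x); destruct (b x); destruct (c x); destruct (d x); simpl in *; kill.
Qed.
End Fun.
Arguments ov {X Y}.

Section Enc.
Variables X Y : Type.
Definition enc (f : rel X Y) : X -> option Y := fun x =>
  match excluded_middle_informative (exists y, f x y) with
  | left H => Some (proj1_sig (constructive_indefinite_description _ H))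
  | right _ => None
  end.

Lemma enc_spec f : is_partial_function f -> forall x y, f x y <-> enc f x = Some y.
Proof. intros pf x y. unfold enc. destruct (excluded_middle_informative _) as [H|H].
  - destruct (constructive_indefinite_description _ H) as [z Hz]. simpl. split.
    + intro. f_equal. eapply pf; eauto.
    + intro E. injection E as ->. exact Hz.
  - split. intro. exfalso; eauto. discriminate.
Qed.

Lemma enc_char (h : rel X Y) x o : (forall y, h x y <-> o = Some y) -> enc h x = o.
Proof. intro K. unfold enc. destruct (excluded_middle_informative _) as [H|H].
  - destruct (constructive_indefinite_description _ H) as [z Hz]. simpl.
    symmetry. apply K, Hz.
  - destruct o as [c|]; auto. exfalso. apply H. exists c. apply K. reflexivity.
Qed.

Lemma enc_inj f g : is_partial_function f -> is_partial_function g -> enc f = enc g -> f = g.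
Proof. intros pf pg E. apply functional_extensionality; intro x.
  apply functional_extensionality; intro y. apply propositional_extensionality.
  rewrite (enc_spec _ pf), (enc_spec _ pg), E. tauto. Qed.

Lemma enc_ru f g : is_partial_function f -> is_partial_function g ->
  enc (restricted_union f g) = ov (enc f) (enc g).
Proof. intros pf pg. apply functional_extensionality; intro x.
  assert (Hf := enc_spec _ pf x). assert (Hg := enc_spec _ pg x).
  unfold ov. apply enc_char. intro y.
  unfold restricted_union, pf_minus, in_dom.
  setoid_rewrite Hf. setoid_rewrite Hg.
  destruct (enc f x) as [a|]; destruct (enc g x) as [b|]; kill.
  all: firstorder congruence.
Qed.
End Enc.

Theorem corollary3p10 :
  (forall (S : Type) (meet join : S -> S -> S),
     is_ado_semilattice S meet join ->
     is_vee_algebra S (fun a b => meet (join a b) (join b a))) /\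
  (forall (S : Type) (vee : S -> S -> S),
     is_functional_vee_algebra S vee -> is_vee_algebra S vee).
Proof.
  split.
  - intros S meet join H. exact (part1 H).
  - intros S vee [X [Y [A [phi [pfA [clA [inA [_ [inj hom]]]]]]]]].
    apply (transfer S (X -> option Y) vee (@ov X Y) (fun a => enc X Y (phi a))).
    + intros a b E. apply inj. apply enc_inj; auto.
    + intros a b. rewrite hom. apply enc_ru; auto.
    + apply fun_vee.
Qed.
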